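(* The $\mathcal{C}$-module $\mathfrak{n}$ is an ideal of $\widehat{\mathfrak{H}^{0}}$ with respect to both the harmonic product $\ast_\hbar$ and the shuffle product $\mathrm{sh}_\hbar$; that is, $\mathfrak n\ast_\hbar\widehat{\mathfrak H^0}\subset\mathfrak n$ and $\mathfrak n\,\mathrm{sh}_\hbar\,\widehat{\mathfrak H^0}\subset\mathfrak n$.
   Context: Let $\mathcal{C}=\mathbb{Q}[\hbar]$ ($\hbar$ formal), $\mathfrak{H}=\mathcal{C}\langle a,b\rangle$ the non-commutative polynomial ring. For $k\ge1$, $g_k=ba^k$. $A=\{\hbar b\}\cup\{ba^k\mid k\ge1\}$, $\mathcal{C}\langle A\rangle$ the $\mathcal{C}$-subalgebra generated by $1$ and $A$, $\mathfrak z$ the $\mathcal C$-span of $A$, $\widehat{\mathfrak H^0}=\mathcal C+\sum_{k\ge1}\mathcal C\langle A\rangle g_k$. Let $\mathfrak n_0$ be the $\mathcal C$-span of $(\hbar b)^{\alpha_1}g_{\beta_1+1}\cdots(\hbar b)^{\alpha_r}g_{\beta_r+1}$ with $r\ge1$, $\alpha_i,\beta_i\ge0$ and $\alpha_s\ge1,\beta_t\ge1$ for some $1\le s\le t\le r$; $\mathfrak n=\mathfrak n_0+\hbar\widehat{\mathfrak H^0}$. Harmonic product: $\circ_\hbar$ symmetric $\mathcal C$-bilinear on $\mathfrak z$ with $(\hbar b)\circ_\hbar(\hbar b)=\hbar\cdot\hbar b$, $(\hbar b)\circ_\hbar g_k=\hbar g_k$, $g_k\circ_\hbar g_l=g_{k+l}$;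 $\ast_\hbar$ on $\mathcal{C}\langle A\rangle$ is $\mathcal C$-bilinear with $w\ast_\hbar1=1\ast_\hbar w=w$, $(wu)\ast_\hbar(w'v)=(w\ast_\hbar w'v)u+(wu\ast_\hbar w')v+(w\ast_\hbar w')(u\circ_\hbar v)$ ($u,v\in A$). Shuffle product $\mathrm{sh}_\hbar$ on $\mathfrak H$: $\mathcal C$-bilinear with $w\,\mathrm{sh}_\hbar\,1=1\,\mathrm{sh}_\hbar\,w=w$, $wa\,\mathrm{sh}_\hbar\,w'a=(wa\,\mathrm{sh}_\hbar\,w'+w\,\mathrm{sh}_\hbar\,w'a+\hbar(w\,\mathrm{sh}_\hbar\,w'))a$, $wb\,\mathrm{sh}_\hbar\,w'=w\,\mathrm{sh}_\hbar\,w'b=(w\,\mathrm{sh}_\hbar\,w')b$. *)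

(* Defs.v *)
From HB Require Import structures.
From mathcomp Require Import all_boot all_order all_algebra.
From mathcomp Require Import finmap.
From mathcomp.multinomials Require Import monalg.
Set Implicit Arguments. Unset Strict Implicit. Unset Printing Implicit Defensive.
Import GRing.Theory.
Local Open Scope ring_scope.

Definition Cr := {poly rat}.
Definition hbar : Cr := 'X.

(* Letters of H: a = true, b = false.  Words of H are {fmonom bool}. *)
Definition word := {fmonom bool}.
Definition H := {malg Cr[word]}.
Definition wordH (s : seq bool) : H := << FMonom s >>.
Definition aH : H := wordH [:: true].
Definition bH : H := wordH [:: false].

(* Elements of A are encoded by nat: 0 is hbar*b, k >= 1 is g_k = b a^k. *)
Definition gH (k : nat) : H := bH * aH ^+ k.
Definition Aletter (i : nat) : H := if i == 0%N then hbar *: bH else gH i.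

(* A-words and the free C-module on them (a model of C<A>; the map iotaA
   below is the (injective) C-linear map into H). *)
Definition Aword := {fmonom nat}.
Definition CA := {malg Cr[Aword]}.
Definition wordA (s : seq nat) : CA := << FMonom s >>.

Definition iotaW (u : Aword) : H := \prod_(i <- (u : seq nat)) Aletter i.
Definition iotaA (X : CA) : H := \sum_(u <- msupp X) X@_u *: iotaW u.

Definition Aspan (P : seq nat -> Prop) (x : H) : Prop :=
  exists X : CA, (forall u, u \in msupp X -> P (u : seq nat)) /\ x = iotaA X.

(* \hat{H^0} = C + sum_k C<A> g_k : span of A-words that are empty or end with some g_k. *)
Definition H0word (u : seq nat) : Prop := u = [::] \/ (0 < last 0%N u)%N.
Definition in_H0 (x : H) : Prop := Aspan H0word x.

(* n_0 : span of (hb)^{a1} g_{b1+1} ... (hb)^{ar} g_{br+1}, r >= 1, with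
   a_s >= 1, b_t >= 1 for some s <= t; equivalently the A-word ends with a
   g-letter and some hbar*b (letter 0) occurs before some g_k with k >= 2. *)
Definition n0word (u : seq nat) : Prop :=
  (0 < last 0%N u)%N /\
  exists i j : nat, (i < j)%N /\ (j < size u)%N /\
    nth 0%N u i = 0%N /\ (2 <= nth 0%N u j)%N.
Definition in_n0 (x : H) : Prop := Aspan n0word x.
Definition in_n (x : H) : Prop :=
  exists y z : H, in_n0 y /\ in_H0 z /\ x = y + hbar *: z.

Definition circA (x y : nat) : CA :=
  if (x == 0%N) || (y == 0%N) then hbar *: wordA [:: x + y]%N
  else wordA [:: x + y]%N.

(* harmonic product of A-words, given REVERSED (last letter first). *)
Fixpoint harr (u : seq nat) : seq nat -> CA :=
  fix harr_in (v : seq nat) : CA :=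
    match u, v with
    | [::], _ => wordA (rev v)
    | _, [::] => wordA (rev u)
    | x :: u', y :: v' =>
        harr u' v * wordA [:: x] + harr_in v' * wordA [:: y]
        + harr u' v' * circA x y
    end.
Definition harW (u v : Aword) : CA := harr (rev u) (rev v).
Definition harm (X Y : CA) : CA :=
  \sum_(u <- msupp X) \sum_(v <- msupp Y) (X@_u * Y@_v) *: harW u v.

(* Shuffle product of words of H, given REVERSED. *)
Fixpoint shr (u : seq bool) : seq bool -> H :=
  fix shr_in (v : seq bool) : H :=
    match u, v with
    | [::], _ => wordH (rev v)
    | _, [::] => wordH (rev u)
    | false :: u', _ => shr u' v * bH
    | true :: u', false :: v' => shr_in v' * bH
    | true :: u', true :: v' => (shr u' v + shr_in v' + hbar *: shr u' v') * aH
    end.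
Definition shW (u v : word) : H := shr (rev u) (rev v).
Definition shuffle (x y : H) : H :=
  \sum_(u <- msupp x) \sum_(v <- msupp y) (x@_u * y@_v) *: shW u v.

(* Main.v *)
Require Import Defs.
From HB Require Import structures.
From mathcomp Require Import all_boot all_order all_algebra.
From mathcomp Require Import finmap zify.
From mathcomp.multinomials Require Import monalg.
Set Implicit Arguments. Unset Strict Implicit. Unset Printing Implicit Defensive.
Import GRing.Theory.
Local Open Scope ring_scope.


Section Gen.
Variable (K : choiceType) (R : comRingType).

Lemma scalU (c d : R) (m : K) : c *: << d *g m >> = << c * d *g m >> :> {malg R[K]}.
Proof. by apply/malgP => k; rewrite mcoeffZ !mcoeffU mulrnAr. Qed.

Definition lin (V : lmodType R) (F : K -> V) (X : {malg R[K]}) : V :=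
  \sum_(k <- msupp X) X@_k *: F k.

Lemma linEw (V : lmodType R) (F : K -> V) X (d : {fset K}) :
  (msupp X `<=` d)%fset -> lin F X = \sum_(k <- d) X@_k *: F k.
Proof.
move=> le; rewrite /lin (big_fset_incl _ le) => //= x xd /mcoeff_outdom ->.
by rewrite scale0r.
Qed.

Lemma linD (V : lmodType R) (F : K -> V) X Y : lin F (X + Y) = lin F X + lin F Y.
Proof.
have h1 : (msupp X `<=` msupp X `|` msupp Y `|` msupp (X + Y)%R)%fset.
  by apply/fsubsetP => k kY; rewrite !in_fsetU kY.
have h2 : (msupp Y `<=` msupp X `|` msupp Y `|` msupp (X + Y)%R)%fset.
  by apply/fsubsetP => k kY; rewrite !in_fsetU kY !orbT.
have h3 : (msupp (X + Y) `<=` msupp X `|` msupp Y `|` msupp (X + Y)%R)%fset.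
  by apply/fsubsetP => k kY; rewrite !in_fsetU kY !orbT.
rewrite (linEw _ h1) (linEw _ h2) (linEw _ h3) -big_split /=.
by apply: eq_bigr => k _; rewrite mcoeffD scalerDl.
Qed.

Lemma linZ (V : lmodType R) (F : K -> V) c X : lin F (c *: X) = c *: lin F X.
Proof.
rewrite (linEw _ (msuppZ_le c X)) /lin scaler_sumr.
by apply: eq_bigr => k _; rewrite mcoeffZ scalerA.
Qed.

Lemma linU (V : lmodType R) (F : K -> V) c m : lin F << c *g m >> = c *: F m.
Proof. by rewrite (linEw _ msuppU_le) big_seq_fset1 mcoeffUU. Qed.

Lemma lin0 (V : lmodType R) (F : K -> V) : lin F 0 = 0.
Proof. by rewrite /lin msupp0 big_seq_fset0. Qed.

Lemma lin_ind (V : lmodType R) (P : V -> Prop) (F : K -> V) X :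
  P 0 -> (forall x y, P x -> P y -> P (x + y)) -> (forall c x, P x -> P (c *: x)) ->
  (forall k, k \in msupp X -> P (F k)) -> P (lin F X).
Proof.
move=> P0 PD PZ PF; rewrite /lin big_seq.
by apply: (big_ind P) => // k kX; apply: PZ; apply: PF.
Qed.

Lemma lin_comp (V W : lmodType R) (f : V -> W) (F : K -> V) X :
  f 0 = 0 -> (forall x y, f (x + y) = f x + f y) -> (forall c x, f (c *: x) = c *: f x) ->
  f (lin F X) = lin (fun k => f (F k)) X.
Proof.
move=> f0 fD fZ; rewrite /lin; elim: (msupp X : seq K) => [|k s IH].
  by rewrite !big_nil.
by rewrite !big_cons fD fZ IH.
Qed.

End Gen.

Section Mon.
Variable (I : choiceType) (R : comRingType).

Lemma mulUU (c d : R) (s t : seq I) :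
  << c *g FMonom s >> * << d *g FMonom t >> = << c * d *g FMonom (s ++ t) >> :> {malg R[{fmonom I}]}.
Proof.
rewrite malgM_def fgmulUU; congr << _ *g _ >>.
by apply: val_inj; rewrite /= fmM.
Qed.

Lemma commC (c : R) (x : {malg R[{fmonom I}]}) : x * c%:MP = c%:MP * x.
Proof.
apply/malgP => k.
rewrite mcoeffCM (mcoeffMlw _ (fsubset_refl _) (msuppC_le c)).
rewrite (eq_bigr (fun k1 => x@_k1 * c *+ (k1 == k))); last first.
  by move=> k1 _; rewrite big_seq_fset1 mcoeffC eqxx mulr1n mulm1.
rewrite -(mcoeffZ c x k) [in RHS](monalgE (c *: x)) raddf_sum /=.
rewrite (big_fset_incl _ (msuppZ_le c x)) /=; last first.
  by move=> k1 _ /mcoeff_outdom ->; rewrite mcoeffU mul0rn.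
by apply: eq_bigr => k1 _; rewrite mcoeffU mcoeffZ mulrC.
Qed.

Lemma mulrZ (c : R) (x y : {malg R[{fmonom I}]}) : x * (c *: y) = c *: (x * y).
Proof. by rewrite -!mul_malgC mulrA commC mulrA. Qed.

End Mon.

Lemma mulrZA (c : Cr) (x y : CA) : x * (c *: y) = c *: (x * y).
Proof. exact: mulrZ. Qed.

Definition SP (P : seq nat -> Prop) (X : CA) := forall k, k \in msupp X -> P (k : seq nat).
Definition Good (P Q : seq nat -> Prop) (X : CA) :=
  exists Y Z, SP P Y /\ SP Q Z /\ X = Y + hbar *: Z.

Lemma SP0 P : SP P 0.
Proof. by move=> k; rewrite msupp0. Qed.

Lemma SPD P X Y : SP P X -> SP P Y -> SP P (X + Y).
Proof.
move=> hX hY k /(fsubsetP (msuppD_le X Y)); rewrite in_fsetU => /orP[].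
  exact: hX.
exact: hY.
Qed.

Lemma SPZ P c X : SP P X -> SP P (c *: X).
Proof. by move=> hX k /(fsubsetP (msuppZ_le c X)); apply: hX. Qed.

Lemma SPT X : SP (fun _ => True) X.
Proof. by []. Qed.

Lemma SPw P s : P s -> SP P (wordA s).
Proof. by move=> Ps k; rewrite /wordA msuppU1 in_fset1 => /eqP ->. Qed.

Lemma SPmul P P' z X : SP P X -> (forall w, P w -> P' (rcons w z)) ->
  SP P' (X * wordA [:: z]).
Proof.
move=> hX hP k /msuppM_le [k1 [k2 [k1X]]].
rewrite /wordA msuppU1 in_fset1 => /eqP -> ->.
by rewrite fmM /= cats1; apply: hP; apply: hX.
Qed.

Lemma Good0 P Q : Good P Q 0.
Proof. by exists 0, 0; split; [exact: SP0|split; [exact: SP0|rewrite scaler0 addr0]]. Qed.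

Lemma GoodD P Q X Y : Good P Q X -> Good P Q Y -> Good P Q (X + Y).
Proof.
move=> [Y1 [Z1 [h1 [h2 ->]]]] [Y2 [Z2 [h3 [h4 ->]]]].
exists (Y1 + Y2), (Z1 + Z2); split; first exact: SPD.
split; first exact: SPD.
by rewrite scalerDr addrACA.
Qed.

Lemma GoodZ P Q c X : Good P Q X -> Good P Q (c *: X).
Proof.
move=> [Y1 [Z1 [h1 [h2 ->]]]]; exists (c *: Y1), (c *: Z1); split; first exact: SPZ.
split; first exact: SPZ.
by rewrite scalerDr !scalerA mulrC.
Qed.

Lemma GoodSP P Q X : SP P X -> Good P Q X.
Proof. by move=> h; exists X, 0; split=> //; split; [exact: SP0|rewrite scaler0 addr0]. Qed.

Lemma GoodH P Q X : SP Q X -> Good P Q (hbar *: X).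
Proof. by move=> h; exists 0, X; split; [exact: SP0|split=> //; rewrite add0r]. Qed.

Lemma Goodmul P Q P' Q' z X : Good P Q X -> (forall w, P w -> P' (rcons w z)) ->
  (forall w, Q w -> Q' (rcons w z)) -> Good P' Q' (X * wordA [:: z]).
Proof.
move=> [Y [Z [h1 [h2 ->]]]] hP hQ; exists (Y * wordA [:: z]), (Z * wordA [:: z]).
split; first exact: SPmul hP.
split; first exact: SPmul hQ.
by rewrite mulrDl scalerAl.
Qed.

Lemma circAE x y : circA x y = (if (x == 0%N) || (y == 0%N) then hbar else 1) *: wordA [:: (x + y)%N].
Proof. by rewrite /circA; case: ifP => _; rewrite ?scale1r. Qed.

Lemma harr_cons x u y v : harr (x :: u) (y :: v) =
  harr u (y :: v) * wordA [:: x] + harr (x :: u) v * wordA [:: y] + harr u v * circA x y.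
Proof. by []. Qed.

Lemma harr_nil v : harr [::] v = wordA (rev v).
Proof. by case: v. Qed.

Lemma harr_nilr u : harr u [::] = wordA (rev u).
Proof. by case: u. Qed.

Definition Bad (u : seq nat) : Prop :=
  exists i j : nat, (i < j)%N /\ (j < size u)%N /\
    nth 0%N u i = 0%N /\ (2 <= nth 0%N u j)%N.

Lemma Bad_nil : ~ Bad [::].
Proof. by move=> [i [j [_ [//]]]]. Qed.

Lemma BadE w k : Bad (rcons w k) <-> Bad w \/ (0%N \in w /\ (2 <= k)%N).
Proof.
split.
  move=> [i [j [ij [js [hi hj]]]]].
  move: js; rewrite size_rcons ltnS leq_eqVlt => /orP[/eqP jE|js].
    right; move: hj hi; rewrite !nth_rcons jE ltnn eqxx -jE ij => hk hi; split=> //.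
    by rewrite -hi mem_nth // -jE.
  left; exists i, j; split=> //; split=> //.
  by move: hi hj; rewrite !nth_rcons js (ltn_trans ij js).
move=> [[i [j [ij [js [hi hj]]]]]|[w0 k2]].
  exists i, j; split=> //; split; first by rewrite size_rcons ltnS ltnW.
  by rewrite !nth_rcons js (ltn_trans ij js).
exists (index 0%N w), (size w); split; first by rewrite index_mem.
split; first by rewrite size_rcons.
by rewrite !nth_rcons index_mem w0 ltnn eqxx nth_index.
Qed.

Lemma Bad_rcons w k : Bad w -> Bad (rcons w k).
Proof. by move=> h; apply/BadE; left. Qed.

Definition All : seq nat -> Prop := fun _ => True.

Lemma circ_piece P' Q' x y X :
  (forall w, Q' (rcons w (x + y)%N)) ->
  ((x != 0%N) && (y != 0%N) -> Good P' Q' (X * wordA [:: (x + y)%N])) ->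
  Good P' Q' (X * circA x y).
Proof.
move=> hQ hG; rewrite circAE; case: ifP => [_|/negbT].
  rewrite mulrZA; apply: GoodH; apply: SPmul (@SPT X) _ => w _; exact: hQ.
by rewrite negb_or scale1r => /hG.
Qed.

Lemma L0 u v : 0%N \in rev u -> Good (fun w => 0%N \in w) All (harr u v).
Proof.
elim: u v => [|x u IHu] v; first by rewrite in_nil.
rewrite rev_cons mem_rcons in_cons => h0.
elim: v => [|y v IHv].
  by rewrite harr_nilr; apply: GoodSP; apply: SPw; rewrite rev_cons mem_rcons in_cons.
rewrite harr_cons; apply: GoodD; [apply: GoodD|].
- have [x0|xn0] := eqVneq x 0%N.
    apply: GoodSP; apply: SPmul (@SPT _) _ => w _.
    by rewrite x0 mem_rcons in_cons eqxx.
  move: h0; rewrite eq_sym (negbTE xn0) /= => h0.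
  apply: Goodmul (IHu _ h0) _ _ => // w hw; by rewrite mem_rcons in_cons hw orbT.
- apply: Goodmul IHv _ _ => // w hw; by rewrite mem_rcons in_cons hw orbT.
- apply: circ_piece => // /andP[xn0 _].
  move: h0; rewrite eq_sym (negbTE xn0) /= => h0.
  apply: Goodmul (IHu _ h0) _ _ => // w hw; by rewrite mem_rcons in_cons hw orbT.
Qed.

Lemma L1step (P Q : seq nat -> Prop) x u y v :
  (forall w z, (Bad w \/ (0%N \in w /\ (2 <= z)%N)) -> (z = x \/ z = y \/ z = (x + y)%N) ->
     P (rcons w z)) ->
  (forall w z, (z = x \/ z = y \/ z = (x + y)%N) -> Q (rcons w z)) ->
  Bad (rcons (rev u) x) ->
  (Bad (rev u) -> forall v, Good Bad All (harr u v)) ->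
  Good Bad All (harr (x :: u) v) ->
  Good P Q (harr (x :: u) (y :: v)).
Proof.
move=> hP hQ hB IHu IHv; rewrite harr_cons; apply: GoodD; [apply: GoodD|].
- case/BadE: hB => [hB|[h0 h2]].
    apply: Goodmul (IHu hB _) _ _ => w hw; [apply: hP; by [left|left]|apply: hQ; by left].
  apply: Goodmul (L0 _ h0) _ _.
    by move=> w hw; apply: hP; [right|left].
  by move=> w _; apply: hQ; left.
- apply: Goodmul IHv _ _ => w hw; [apply: hP; by [left|right; left]|apply: hQ; by right; left].
- apply: circ_piece; first by move=> w; apply: hQ; right; right.
  move=> /andP[xn0 yn0].
  case/BadE: hB => [hB|[h0 h2]].
    apply: Goodmul (IHu hB _) _ _ => w hw;
      [apply: hP; by [left|right; right]|apply: hQ; by right; right].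
  apply: Goodmul (L0 _ h0) _ _.
    by move=> w hw; apply: hP; [right; split=> //; apply: leq_trans h2 (leq_addr _ _)|right; right].
  by move=> w _; apply: hQ; right; right.
Qed.

Lemma L1 u v : Bad (rev u) -> Good Bad All (harr u v).
Proof.
elim: u v => [|x u IHu] v; first by move/Bad_nil.
rewrite rev_cons => hB.
elim: v => [|y v IHv].
  by rewrite harr_nilr; apply: GoodSP; apply: SPw; rewrite rev_cons.
apply: L1step => //.
- move=> w z [hw|hw] _; apply/BadE; by [left|right].
- by move=> u' hu; apply: IHu.
Qed.

Lemma L2 p q : n0word p -> H0word q -> Good n0word H0word (harr (rev p) (rev q)).
Proof.
case/lastP: p => [|p x]; first by move=> [].
move=> [/= hx hB]; rewrite last_rcons in hx.
have hB' : Bad (rcons (rev (rev p)) x) by rewrite revK.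
rewrite rev_rcons; case/lastP: q => [|q y].
  by move=> _; rewrite harr_nilr; apply: GoodSP; apply: SPw; rewrite rev_cons revK; split=> //; rewrite last_rcons.
move=> hy; have {hy} hy : (0 < y)%N.
  by case: hy => [/eqP|]; [rewrite -size_eq0 size_rcons|rewrite last_rcons].
rewrite rev_rcons; apply: L1step => //.
- move=> w z hw hz; split.
    by rewrite last_rcons; case: hz => [->|[->|->]] //; rewrite addn_gt0 hx.
  by apply/BadE.
- by move=> w z hz; right; rewrite last_rcons; case: hz => [->|[->|->]] //; rewrite addn_gt0 hx.
- by move=> hb v; apply: L1.
- by apply: L1; rewrite rev_cons revK.
Qed.

Lemma L3 p q : H0word p -> H0word q -> SP H0word (harr (rev p) (rev q)).
Proof.
have posl z w : (0 < z)%N -> H0word (rcons w z).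
  by move=> hz; right; rewrite last_rcons.
case/lastP: p => [|p x] => hp hq.
  by rewrite harr_nil revK; apply: SPw.
case/lastP: q hq => [|q y] hq.
  by rewrite harr_nilr revK; apply: SPw.
have hx : (0 < x)%N.
  by case: hp => [/eqP|]; [rewrite -size_eq0 size_rcons|rewrite last_rcons].
have hy : (0 < y)%N.
  by case: hq => [/eqP|]; [rewrite -size_eq0 size_rcons|rewrite last_rcons].
rewrite !rev_rcons harr_cons; apply: SPD; [apply: SPD|].
- by apply: SPmul (@SPT _) _ => w _; apply: posl.
- by apply: SPmul (@SPT _) _ => w _; apply: posl.
- rewrite circAE mulrZA; apply: SPZ; apply: SPmul (@SPT _) _ => w _; apply: posl.
  by rewrite addn_gt0 hx.
Qed.

Fixpoint flat (w : seq nat) : seq bool :=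
  if w is k :: w' then false :: nseq k true ++ flat w' else [::].

Lemma flat_rcons w k : flat (rcons w k) = flat w ++ false :: nseq k true.
Proof. elim: w => [|j w IH] /=; first by rewrite cats0. by rewrite IH -catA. Qed.

Lemma flat_head w : flat w = [::] \/ exists t, flat w = false :: t.
Proof. by case: w => [|k w] /=; [left|right; eexists]. Qed.

Lemma nseq_cat_inj k k' s s' :
  (s = [::] \/ exists t, s = false :: t) -> (s' = [::] \/ exists t, s' = false :: t) ->
  nseq k true ++ s = nseq k' true ++ s' -> k = k' /\ s = s'.
Proof.
move=> hs hs'; elim: k k' => [|k IH] [|k'] /= e.
- by [].
- by case: hs e => [->|[t ->]] e; discriminate e.
- by case: hs' e => [->|[t ->]] e; discriminate e.
- by case: e => /IH [-> ->].
Qed.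

Lemma flat_inj : injective flat.
Proof.
elim=> [|k w IH] [|k' w'] //=.
case=> /nseq_cat_inj h.
by case: (h (flat_head w) (flat_head w')) => -> /IH ->.
Qed.

Lemma one_malg : (1 : H) = << FMonom [::] >>.
Proof. by rewrite /GRing.one /= /fgone; congr << _ >>; apply: val_inj; rewrite /= fm1. Qed.

Lemma mulUUH (c d : Cr) (s t : seq bool) :
  << c *g FMonom s >> * << d *g FMonom t >> = << c * d *g FMonom (s ++ t) >> :> H.
Proof. exact: mulUU. Qed.

Lemma aH_exp k : aH ^+ k = << FMonom (nseq k true) >>.
Proof.
elim: k => [|k IH]; first by rewrite expr0 one_malg.
by rewrite exprS IH /aH /wordH mulUUH mulr1.
Qed.

Lemma scalUH (c d : Cr) m : c *: << d *g m >> = << c * d *g m >> :> H.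
Proof. exact: scalU. Qed.

Lemma Aletter_E k : Aletter k =
  << (if k == 0%N then hbar else 1) *g FMonom (false :: nseq k true) >>.
Proof.
rewrite /Aletter; have [->|kn0] := eqVneq k 0%N.
  by rewrite /bH /wordH scalUH mulr1.
by rewrite /gH aH_exp /bH /wordH mulUUH mulr1.
Qed.

Lemma iotaW_E w : iotaW (FMonom w) =
  << hbar ^+ (count_mem 0%N w) *g FMonom (flat w) >>.
Proof.
elim: w => [|k w IH].
  by rewrite /iotaW /= big_nil one_malg expr0.
rewrite /iotaW /= big_cons -/(iotaW (FMonom w)) IH Aletter_E mulUUH /=.
have [->|kn0] := eqVneq k 0%N; first by rewrite /= exprS.
by rewrite mul1r.
Qed.

Lemma iotaA_lin X : iotaA X = lin iotaW X.
Proof. by []. Qed.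

Lemma iotaAD X Y : iotaA (X + Y) = iotaA X + iotaA Y.
Proof. exact: linD. Qed.

Lemma iotaAZ c X : iotaA (c *: X) = c *: iotaA X.
Proof. exact: linZ. Qed.

Lemma mcoeff_iotaA X w :
  (iotaA X)@_(FMonom (flat w)) = X@_(FMonom w) * hbar ^+ (count_mem 0%N w).
Proof.
rewrite iotaA_lin (@lin_comp _ Cr H Cr^o (mcoeff (FMonom (flat w)))) //; last first.
- by move=> c x; rewrite mcoeffZ.
- by move=> x y; rewrite mcoeffD.
- by rewrite mcoeff0.
have le : (msupp X `<=` msupp X `|` [fset FMonom w])%fset.
  by apply/fsubsetP => k kX; rewrite in_fsetU kX.
rewrite (linEw _ le) (big_fsetD1 (FMonom w)) /=; last by rewrite in_fsetU in_fset1 eqxx orbT.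
rewrite big1_fset ?addr0.
  by rewrite (iotaW_E w) mcoeffU eqxx mulr1n.
move=> k; rewrite in_fsetD1 => /andP[kw _] _.
rewrite -(fmK k) iotaW_E mcoeffU.
case: eqP => [[/flat_inj e]|]; last by rewrite mulr0n scaler0.
by move: kw; rewrite -(fmK k) e eqxx.
Qed.

Lemma hbar_neq0 n : hbar ^+ n != 0.
Proof. by rewrite expf_neq0 // /hbar polyX_eq0. Qed.

Lemma iotaA_inj X Y : iotaA X = iotaA Y -> X = Y.
Proof.
move=> e; apply/malgP => k; rewrite -(fmK k).
have := congr1 (mcoeff (FMonom (flat k))) e; rewrite !mcoeff_iotaA.
by move/mulIf; apply; apply: hbar_neq0.
Qed.

Lemma in_H0_SP Y : in_H0 (iotaA Y) -> SP H0word Y.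
Proof. by move=> [Y0 [h /iotaA_inj ->]]. Qed.

Lemma in_n_Good X : in_n (iotaA X) -> Good n0word H0word X.
Proof.
move=> [y [z [[Y1 [h1 ->]] [[Z1 [h2 ->]] e]]]].
exists Y1, Z1; split=> //; split=> //.
by apply: iotaA_inj; rewrite e iotaAD iotaAZ.
Qed.

Lemma Good_in_n X : Good n0word H0word X -> in_n (iotaA X).
Proof.
move=> [Y [Z [h1 [h2 ->]]]]; exists (iotaA Y), (iotaA Z); split; first by exists Y.
split; first by exists Z.
by rewrite iotaAD iotaAZ.
Qed.

Lemma harm_part X Y : in_n (iotaA X) -> in_H0 (iotaA Y) -> in_n (iotaA (harm X Y)).
Proof.
move=> /in_n_Good [Y1 [Z1 [h1 [h2 eX]]]] /in_H0_SP hY.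
apply: Good_in_n; rewrite /harm big_seq.
apply: (big_ind (Good n0word H0word)); [exact: Good0|exact: GoodD|].
move=> u uX; rewrite big_seq.
apply: (big_ind (Good n0word H0word)); [exact: Good0|exact: GoodD|].
move=> v vY; rewrite eX mcoeffD mcoeffZ mulrDl scalerDl.
have Hv := hY v vY.
apply: GoodD.
  have [uY1|uY1] := boolP (u \in msupp Y1); last first.
    by rewrite (mcoeff_outdom uY1) mul0r scale0r; exact: Good0.
  apply: GoodZ; rewrite /harW; exact: L2 (h1 _ uY1) Hv.
have [uZ1|uZ1] := boolP (u \in msupp Z1); last first.
  by rewrite (mcoeff_outdom uZ1) mulr0 mul0r scale0r; exact: Good0.
rewrite -mulrA -scalerA; apply: GoodH; apply: SPZ; rewrite /harW.
exact: L3 (h2 _ uZ1) Hv.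
Qed.

Local Open Scope nat_scope.

Record st := St { zc : nat; eb : bool; zb : bool; pp : bool; ta : nat; ne : bool; hb : bool }.

Definition ea x := ne x && ~~ eb x.

Definition step (x : st) (c : bool) : st :=
  if c then St (zc x - eb x) false (zb x) (pp x || zb x && (0 < ta x)) (minn (ta x).+1 2) true
              (if ne x then hb x else false)
  else St (zc x).+1 true (zb x || eb x) (pp x) 0 true (if ne x then hb x else true).

Definition st0 := St 0 false false false 0 false false.
Definition stt (s : seq bool) := foldl step st0 s.

Lemma stt_rcons s c : stt (rcons s c) = step (stt s) c.
Proof. exact: foldl_rcons. Qed.

Definition wf x := [/\ eb x -> ta x = 0, ta x <= 2, zb x -> 2 <= ta x -> pp x
   & eb x -> 0 < zc x].

Lemma wf0 : wf st0. Proof. by []. Qed.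

Lemma wf_step x c : wf x -> wf (step x c).
Proof.
case: x => z e b p t n h [/= h1 h2 h3 h4]; case: c; split => //=.
- by rewrite geq_minr.
- move=> hb2 ht; rewrite hb2 /=; apply/orP; right; lia.
Qed.

Lemma wf_stt s : wf (stt s).
Proof.
elim/last_ind: s => [|s c IH]; first exact: wf0.
by rewrite stt_rcons; apply: wf_step.
Qed.

Definition Inv X Y Z m :=
  [/\ zc Z <= zc X + zc Y + m,
      eb X || eb Y -> eb Z,
      zc Z = zc X + zc Y + m -> pp X -> pp Z,
      zc Z = zc X + zc Y + m -> zb X -> pp Z || zb Z && ((minn (ta X) 2 <= ta Z) || eb Y)
    & [/\ (~~ ne X || ea X) -> (~~ ne Y || ea Y) -> (~~ ne Z || ea Z),
          ne X || ne Y -> ne Z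
        & (~~ ne X || hb X) -> (~~ ne Y || hb Y) -> (~~ ne Z || hb Z)]].

Lemma Inv_base1 Y : Inv st0 Y Y 0.
Proof. by split=> //=; rewrite add0n addn0. Qed.

Lemma Inv_base2 X : Inv X st0 X 0.
Proof.
split=> //=; rewrite ?addn0 ?orbF //.
by move=> _ ->; rewrite geq_minl orbT.
Qed.

Ltac dest X Y Z :=
  case: X => zx ex bx px tx nx hx; case: Y => zy ey by' py ty ny hy;
  case: Z => zz ez bz pz tz nz hz.

Lemma Inv_B1 X Y Z m : Inv X Y Z m -> Inv (step X false) Y (step Z false) m.
Proof.
dest X Y Z; rewrite /Inv /ea /=; move=> [i1 i2 i3 i4 [i5 i6 i7]].
split; [| | | |split].
- clear -i1; lia.
- by [].
- move=> e p; apply: i3 => //; clear -e; lia.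
- move=> e /orP[b|b].
    have e' : zz = zx + zy + m by clear -e; lia.
    by case/orP: (i4 e' b) => [->//|/andP[-> _]]; rewrite /= ?orbT.
  by rewrite i2 ?b // !orbT.
- by [].
- by [].
- move=> hX hY; destruct nz => //=; apply: (i7 _ hY) => //.
  by destruct nx.
Qed.

Lemma Inv_B2 X Y Z m : ea X -> Inv X Y Z m -> Inv X (step Y false) (step Z false) m.
Proof.
dest X Y Z; rewrite /Inv /ea /=; move=> hea [i1 i2 i3 i4 [i5 i6 i7]].
split; [| | | |split].
- clear -i1; lia.
- by [].
- move=> e p; apply: i3 => //; clear -e; lia.
- move=> e b.
  have e' : zz = zx + zy + m by clear -e; lia.
  by case/orP: (i4 e' b) => [->//|/andP[-> _]]; rewrite /= ?orbT.
- by [].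
- by [].
- move=> hX hY; destruct nz => //=; apply: (i7 hX _) => //.
  by destruct ny.
Qed.

Lemma Inv_A1 X Y Z m : wf X -> wf Z -> ea Y -> Inv X Y Z m ->
  Inv (step X true) Y (step Z true) m.
Proof.
dest X Y Z; rewrite /Inv /ea /wf /=.
move=> [w1 w2 w3 w4] [v1 v2 v3 v4] /andP[hny hey] [i1 i2 i3 i4 [i5 i6 i7]].
rewrite (negbTE hey) ?orbF in i2 i4.
have ee : zz - ez = zx - ex + zy + m -> zz = zx + zy + m /\ ex = ez.
  move=> e; destruct ex; destruct ez; try by have := i2 isT.
  - by have := w4 isT; have := v4 isT; clear -e; simpl in *; split=> //; lia.
  - by have := v4 isT; clear -e i1; simpl in *; lia.
  - by simpl in *; split=> //; lia.
split; [| | | |split].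
- destruct ex; destruct ez; try by have := i2 isT.
  + by have := w4 isT; have := v4 isT; clear -i1; simpl in *; lia.
  + by clear -i1; simpl in *; lia.
  + by clear -i1; simpl in *; lia.
- by rewrite (negbTE hey).
- move=> /ee [e1 e2] /orP[p|/andP[b t]]; first by rewrite i3.
  case/orP: (i4 e1 b) => [->//|/andP[-> t']]; apply/orP; right; rewrite /=.
  by clear -t t'; lia.
- move=> /ee [e1 e2] b.
  case/orP: (i4 e1 b) => [->//|/andP[-> t']]; apply/orP; right; rewrite /=.
  by clear -t'; apply/orP; left; lia.
- by [].
- by [].
- move=> hX hY; destruct nx => //; destruct nz; last by have := i6 isT.
  by apply: i7.
Qed.

Lemma Inv_A2 X Y Z m : wf X -> wf Y -> wf Z -> ea X -> Inv X Y Z m ->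
  Inv X (step Y true) (step Z true) m.
Proof.
dest X Y Z; rewrite /Inv /ea /wf /=.
move=> [w1 w2 w3 w4] [u1 u2 u3 u4] [v1 v2 v3 v4] /andP[hnx hex] [i1 i2 i3 i4 [i5 i6 i7]].
rewrite (negbTE hex) /= in i2.
have ee : zz - ez = zx + (zy - ey) + m -> zz = zx + zy + m /\ ey = ez.
  move=> e; destruct ey; destruct ez; try by have := i2 isT.
  - by have := u4 isT; have := v4 isT; clear -e; simpl in *; split=> //; lia.
  - by have := v4 isT; clear -e i1; simpl in *; lia.
  - by simpl in *; split=> //; lia.
split; [| | | |split].
- destruct ey; destruct ez; try by have := i2 isT.
  + by have := u4 isT; have := v4 isT; clear -i1; simpl in *; lia.
  + by clear -i1; simpl in *; lia.
  + by clear -i1; simpl in *; lia.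
- by rewrite (negbTE hex).
- by move=> /ee [e1 e2] p; rewrite i3.
- move=> /ee [e1 e2] b.
  case/orP: (i4 e1 b) => [->//|/andP[hbz t']]; rewrite hbz /=.
  case/orP: t' => [t'|eY].
    by apply/orP; right; clear -t'; rewrite orbF; lia.
  have tz0 := v1 (i2 eY); rewrite tz0.
  case: (leqP 2 tx) => [t2|t2]; last by apply/orP; right; clear -t2; rewrite orbF; lia.
  by rewrite i3 // w3.
- by [].
- by [].
- move=> hX hY; destruct ny => //; destruct nz; last by have := i6 (orbT _).
  by apply: i7.
Qed.

Lemma Inv_A3 X Y Z m : wf X -> wf Y -> wf Z -> Inv X Y Z m ->
  Inv (step X true) (step Y true) (step Z true) m.+1.
Proof.
dest X Y Z; rewrite /Inv /ea /wf /=.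
move=> [w1 w2 w3 w4] [u1 u2 u3 u4] [v1 v2 v3 v4] [i1 i2 i3 i4 [i5 i6 i7]].
have ee : zz - ez = zx - ex + (zy - ey) + m.+1 ->
    [/\ zz = zx + zy + m, ex, ey & ez].
  move=> e; destruct ex; destruct ey; destruct ez; try by have := i2 isT.
  - by have := w4 isT; have := u4 isT; have := v4 isT; clear -e; simpl in *; split=> //; lia.
  - by have := w4 isT; have := v4 isT; clear -e i1; simpl in *; lia.
  - by have := u4 isT; have := v4 isT; clear -e i1; simpl in *; lia.
  - by have := v4 isT; clear -e i1; simpl in *; lia.
  - by clear -e i1; simpl in *; lia.
split; [| | | |split].
- destruct ex; destruct ey; destruct ez; try by have := i2 isT.
  + by have := w4 isT; have := u4 isT; have := v4 isT; clear -i1; simpl in *; lia.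
  + by have := w4 isT; have := v4 isT; clear -i1; simpl in *; lia.
  + by have := u4 isT; have := v4 isT; clear -i1; simpl in *; lia.
  + by have := v4 isT; clear -i1; simpl in *; lia.
  + by clear -i1; simpl in *; lia.
- by [].
- move=> /ee [e1 hex hey hez] /orP[p|/andP[b t]]; first by rewrite i3.
  by move: t; rewrite w1.
- move=> /ee [e1 hex hey hez] b.
  case/orP: (i4 e1 b) => [->//|/andP[-> t']]; apply/orP; right; rewrite /= w1 //.
  by apply/orP; left; clear; lia.
- by [].
- by [].
- move=> hX hY; destruct nx => //; destruct ny => //; destruct nz; last by have := i6 isT.
  by apply: i7.
Qed.

Local Open Scope ring_scope.

Inductive Span (G : H -> Prop) : H -> Prop :=
| Sp0 : Span G 0
| SpD x y : Span G x -> Span G y -> Span G (x + y)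
| SpZ c g : G g -> Span G (c *: g).

Lemma Span_mul G G' x l : Span G x -> (forall g, G g -> G' (g * l)) -> Span G' (x * l).
Proof.
move=> hx hG; elim: hx => [|x1 y1 _ h1 _ h2|c g Gg].
- by rewrite mul0r; apply: Sp0.
- by rewrite mulrDl; apply: SpD.
- by rewrite -scalerAl; apply: SpZ; apply: hG.
Qed.

Lemma Span_hbar G G' x : Span G x -> (forall g, G g -> G' (hbar *: g)) -> Span G' (hbar *: x).
Proof.
move=> hx hG; elim: hx => [|x1 y1 _ h1 _ h2|c g Gg].
- by rewrite scaler0; apply: Sp0.
- by rewrite scalerDr; apply: SpD.
- by rewrite scalerA mulrC -scalerA; apply: SpZ; apply: hG.
Qed.

Lemma Span_ind2 G (P : H -> Prop) x : P 0 -> (forall x y, P x -> P y -> P (x + y)) ->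
  (forall c g, G g -> P (c *: g)) -> Span G x -> P x.
Proof. by move=> P0 PD PG; elim=> //; move=> ? ? _ ? _ ?; apply: PD. Qed.

Definition Gen p q (g : H) := exists s m,
  g = << hbar ^+ m *g FMonom s >> /\ Inv (stt p) (stt q) (stt s) m.

Lemma genb c s : << c *g FMonom s >> * bH = << c *g FMonom (rcons s false) >>.
Proof. by rewrite /bH /wordH mulUUH mulr1 cats1. Qed.

Lemma gena c s : << c *g FMonom s >> * aH = << c *g FMonom (rcons s true) >>.
Proof. by rewrite /aH /wordH mulUUH mulr1 cats1. Qed.

Lemma genh m s : hbar *: << hbar ^+ m *g FMonom s >> = << hbar ^+ m.+1 *g FMonom s >> :> H.
Proof. by rewrite scalUH exprS. Qed.

Lemma shr_nil v : shr [::] v = wordH (rev v).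
Proof. by case: v. Qed.

Lemma shr_nilr u : shr u [::] = wordH (rev u).
Proof. by case: u => [|[] u]. Qed.

Lemma Gen_word p q s : Inv (stt p) (stt q) (stt s) 0 -> Span (Gen p q) (wordH s).
Proof.
move=> hI; rewrite /wordH -[<< _ >>]scale1r; apply: SpZ.
by exists s, 0%N; split; [rewrite expr0|].
Qed.

Lemma shr_tt u v : shr (true :: u) (true :: v) =
  (shr u (true :: v) + shr (true :: u) v + hbar *: shr u v) * aH.
Proof. by []. Qed.

Lemma shr_tf u v : shr (true :: u) (false :: v) = shr (true :: u) v * bH.
Proof. by []. Qed.

Lemma shr_f u d v : shr (false :: u) (d :: v) = shr u (d :: v) * bH.
Proof. by []. Qed.

Lemma ea_stt_t s : ea (stt (rev (true :: s))).
Proof. by rewrite rev_cons stt_rcons. Qed.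

Lemma shr_span u v : Span (Gen (rev u) (rev v)) (shr u v).
Proof.
elim: u v => [|c u IHu] v.
  by rewrite shr_nil; apply: Gen_word; apply: Inv_base1.
elim: v => [|d v IHv].
  by rewrite shr_nilr; apply: Gen_word; apply: Inv_base2.
case: c IHv => IHv.
- case: d IHv => IHv.
  + rewrite shr_tt mulrDl; apply: SpD; [rewrite mulrDl; apply: SpD|].
    * apply: Span_mul (IHu _) _ => g [s [m [-> hI]]]; exists (rcons s true), m.
      split; first exact: gena.
      rewrite [rev (true :: u)]rev_cons !stt_rcons; apply: Inv_A1 => //; try exact: wf_stt.
      exact: ea_stt_t.
    * apply: Span_mul IHv _ => g [s [m [-> hI]]]; exists (rcons s true), m.
      split; first exact: gena.
      rewrite [rev (true :: v)]rev_cons !stt_rcons; apply: Inv_A2 => //; try exact: wf_stt.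
      exact: ea_stt_t.
    * pose G' g := exists s m, g = << hbar ^+ m.+1 *g FMonom s >> /\
                                Inv (stt (rev u)) (stt (rev v)) (stt s) m.
      apply: (@Span_mul G'); first apply: Span_hbar (IHu v) _.
        by move=> g [s [m [-> hI]]]; exists s, m; split=> //; exact: genh.
      move=> g [s [m [-> hI]]]; exists (rcons s true), m.+1.
      split; first exact: gena.
      rewrite !rev_cons !stt_rcons; apply: Inv_A3 => //; exact: wf_stt.
  + rewrite shr_tf; apply: Span_mul IHv _ => g [s [m [-> hI]]].
    exists (rcons s false), m; split; first exact: genb.
    rewrite [rev (false :: v)]rev_cons !stt_rcons; apply: Inv_B2 => //.
    exact: ea_stt_t.
- rewrite shr_f; apply: Span_mul (IHu _) _ => g [s [m [-> hI]]].
  exists (rcons s false), m; split; first exact: genb.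
  rewrite [rev (false :: u)]rev_cons !stt_rcons; exact: Inv_B1.
Qed.

Lemma nseqS_rcons k (x : bool) : nseq k.+1 x = rcons (nseq k x) x.
Proof. by elim: k => //= k ->. Qed.

Lemma fold_as X k : eb X -> ta X = 0%N -> ne X ->
  foldl step X (nseq k true) =
  if k is 0 then X else St (zc X).-1 false (zb X) (pp X || zb X && (1 < k)%N) (minn k 2) true (hb X).
Proof.
case: X => z e b p t n h /= -> -> ->.
elim: k => [|k IH] //; rewrite nseqS_rcons foldl_rcons IH.
case: k {IH} => [|k] /=; first by rewrite subn1 andbF orbF.
rewrite subn0; congr St.
- have h1 : (0 < minn k.+1 2)%N by rewrite leq_min.
  rewrite h1 (_ : (1 < k.+2)%N = true) //.
  by case: b; case: p; rewrite //= ?orbT.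
- lia.
Qed.

Lemma stt_cat s t : stt (s ++ t) = foldl step (stt s) t.
Proof. exact: foldl_cat. Qed.

Lemma stt_flat w : [/\ zc (stt (flat w)) = count_mem 0%N w,
  ne (stt (flat w)) = (w != [::]), hb (stt (flat w)) = (w != [::]),
  ea (stt (flat w)) = (w != [::]) && (0 < last 0%N w)%N
  & [/\ (zb (stt (flat w)) || eb (stt (flat w))) = (0%N \in w) & (pp (stt (flat w)) <-> Bad w)]].
Proof.
elim/last_ind: w => [|w k [i1 i2 i3 i4 [i5 i6]]].
  by split=> //; split=> //; split=> // /Bad_nil.
rewrite flat_rcons stt_cat /= fold_as //.
have nr : (rcons w k != [::]) by rewrite -size_eq0 size_rcons.
rewrite nr last_rcons mem_rcons in_cons -cats1 count_cat /= cats1.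
have hh : (if ne (stt (flat w)) then hb (stt (flat w)) else true) = true.
  by rewrite i2 i3; case: (w != [::]).
clear nr; case: k => [|k] /=.
- rewrite hh i1 addn1 /ea /=; split=> //; split; first by rewrite i5 orbT.
  rewrite BadE i6; split; [by left|by case=> // [[]]].
- rewrite hh i1 /ea /= !addn0; split=> //; split; first by rewrite orbF i5.
  rewrite BadE i5 ltnS; split.
    by case/orP => [/i6 h|/andP[h0 hk]]; [left|right].
  by case=> [/i6 ->|[-> hk]] //; rewrite hk orbT.
Qed.

Lemma ne_stt s : ne (stt s) = (s != [::]).
Proof. by elim/last_ind: s => [|s c _] //; rewrite stt_rcons -size_eq0 size_rcons; case: c. Qed.

Lemma hb_stt s : hb (stt s) = ~~ head true s.
Proof.
elim/last_ind: s => [|s c IH] //; rewrite stt_rcons.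
by case: c => /=; rewrite ne_stt IH; case: (s).
Qed.

Lemma flat_surj s : ~~ ne (stt s) || hb (stt s) -> exists w, flat w = s.
Proof.
rewrite ne_stt hb_stt; elim/last_ind: s => [|s c IH] h; first by exists [::].
case: c h => h.
- case: s IH h => [|x s] IH h; first by move: h.
  case: IH => // w0 hw0.
  case/lastP: w0 hw0 => [|w k] hw; first by move: hw.
  exists (rcons w k.+1); rewrite flat_rcons nseqS_rcons -rcons_cons -rcons_cat.
  by rewrite -flat_rcons hw.
- have [w hw] : exists w, flat w = s.
    by apply: IH; case: s h => //= x s; rewrite orbC => ->.
  by exists (rcons w 0%N); rewrite flat_rcons hw cats1.
Qed.

Lemma Aspan0 P : Aspan P 0.
Proof. by exists 0; split; [exact: SP0|rewrite /iotaA msupp0 big_seq_fset0]. Qed.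

Lemma AspanD P x y : Aspan P x -> Aspan P y -> Aspan P (x + y).
Proof. by move=> [X [hX ->]] [Y [hY ->]]; exists (X + Y); split; [exact: SPD|rewrite iotaAD]. Qed.

Lemma AspanZ P c x : Aspan P x -> Aspan P (c *: x).
Proof. by move=> [X [hX ->]]; exists (c *: X); split; [exact: SPZ|rewrite iotaAZ]. Qed.

Lemma in_n0' : in_n 0.
Proof. by exists 0, 0; split; [exact: Aspan0|split; [exact: Aspan0|rewrite scaler0 addr0]]. Qed.

Lemma in_nD x y : in_n x -> in_n y -> in_n (x + y).
Proof.
move=> [y1 [z1 [h1 [h2 ->]]]] [y2 [z2 [h3 [h4 ->]]]].
exists (y1 + y2), (z1 + z2); split; first exact: AspanD.
by split; [exact: AspanD|rewrite scalerDr addrACA].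
Qed.

Lemma in_nZ c x : in_n x -> in_n (c *: x).
Proof.
move=> [y1 [z1 [h1 [h2 ->]]]]; exists (c *: y1), (c *: z1); split; first exact: AspanZ.
by split; [exact: AspanZ|rewrite scalerDr !scalerA mulrC].
Qed.

Lemma in_n_n0 y : Aspan n0word y -> in_n y.
Proof. by move=> h; exists y, 0; split=> //; split; [exact: Aspan0|rewrite scaler0 addr0]. Qed.

Lemma in_n_H z : Aspan H0word z -> in_n (hbar *: z).
Proof. by move=> h; exists 0, z; split; [exact: Aspan0|split=> //; rewrite add0r]. Qed.

Lemma iotaA_word w : iotaA (wordA w) = iotaW (FMonom w).
Proof. by rewrite /wordA iotaA_lin linU scale1r. Qed.

Lemma gen_final w1 w2 s m : H0word w1 -> H0word w2 ->
  Inv (stt (flat w1)) (stt (flat w2)) (stt s) m ->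
  Aspan H0word (hbar ^+ (count_mem 0%N w1 + count_mem 0%N w2) *: << hbar ^+ m *g FMonom s >>)
  /\ (n0word w1 -> in_n (hbar ^+ (count_mem 0%N w1 + count_mem 0%N w2) *: << hbar ^+ m *g FMonom s >>)).
Proof.
move=> hw1 hw2 [i1 i2 i3 i4 [i5 i6 i7]].
have [z1 n1 h1 a1 [_ p1]] := stt_flat w1.
have [z2 n2 h2 a2 _] := stt_flat w2.
have [w ew] : exists w, flat w = s.
  by apply: flat_surj; apply: i7; rewrite ?n1 ?h1 ?n2 ?h2 orNb.
subst s; have [z n h a [_ p]] := stt_flat w.
have Hw : H0word w.
  have : ~~ ne (stt (flat w)) || ea (stt (flat w)).
    apply: i5.
      by rewrite n1 a1; case: hw1 => [->|->] //; rewrite andbT orNb.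
    by rewrite n2 a2; case: hw2 => [->|->] //; rewrite andbT orNb.
  rewrite n a; case: eqP => [->|_] /=; [by left|by right].
rewrite z1 z2 z in i1 i3.
set e := (count_mem 0%N w1 + count_mem 0%N w2 + m - count_mem 0%N w)%N.
have ge : hbar ^+ (count_mem 0%N w1 + count_mem 0%N w2) *: << hbar ^+ m *g FMonom (flat w) >>
    = iotaA (hbar ^+ e *: wordA w).
  rewrite iotaAZ iotaA_word iotaW_E !scalUH -!exprD; congr << hbar ^+ _ *g _ >>.
  by rewrite /e subnK.
rewrite ge; split.
  by exists (hbar ^+ e *: wordA w); split; [apply: SPZ; apply: SPw|reflexivity].
move=> hn1; case E : e => [|e'].
  have ez : count_mem 0%N w = (count_mem 0%N w1 + count_mem 0%N w2 + m)%N.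
    by apply/eqP; rewrite eqn_leq i1 -subn_eq0 -/e E.
  have hpp : pp (stt (flat w)) by apply: i3 => //; apply/p1; case: hn1.
  have wn : w != [::].
    rewrite -n; apply: i6; rewrite n1; case: hn1; case: (w1) => //.
  apply: in_n_n0; exists (hbar ^+ 0 *: wordA w); split; last reflexivity.
  apply: SPZ; apply: SPw; split; last by apply/p.
  by case: Hw => // ew; move: wn; rewrite ew.
rewrite exprS -scalerA iotaAZ; apply: in_n_H.
by exists (hbar ^+ e' *: wordA w); split; [apply: SPZ; apply: SPw|reflexivity].
Qed.

Lemma shuffle_lin x y : shuffle x y = lin (fun u => lin (shW u) y) x.
Proof.
rewrite /shuffle /lin; apply: eq_bigr => u _; rewrite scaler_sumr.
by apply: eq_bigr => v _; rewrite scalerA.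
Qed.

Lemma lin_iotaA (F : word -> H) X :
  lin F (iotaA X) = lin (fun w : Aword => hbar ^+ (count_mem 0%N w) *: F (FMonom (flat w))) X.
Proof.
rewrite iotaA_lin (@lin_comp _ _ _ _ (lin F)); first last.
- exact: linZ.
- exact: linD.
- exact: lin0.
rewrite /lin; apply: eq_bigr => w _; congr (_ *: _).
by rewrite -[in LHS](fmK w) iotaW_E; exact: linU.
Qed.

Lemma scale_lin (K : choiceType) (F : K -> H) c X :
  c *: lin F X = lin (fun k => c *: F k) X.
Proof.
rewrite (@lin_comp _ _ _ _ (fun x : H => c *: x)).
- by [].
- exact: scaler0.
- by move=> x y; rewrite scalerDr.
- by move=> d x; rewrite !scalerA mulrC.
Qed.

Lemma main_term Y0 w1 : SP H0word Y0 -> H0word w1 ->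
  let T := hbar ^+ (count_mem 0%N w1) *: lin (shW (FMonom (flat w1))) (iotaA Y0) in
  Aspan H0word T /\ (n0word w1 -> in_n T).
Proof.
move=> hY0 hw1 /=; rewrite lin_iotaA scale_lin.
apply: (lin_ind (P := fun x => Aspan H0word x /\ (n0word w1 -> in_n x))).
- by split; [exact: Aspan0|move=> _; exact: in_n0'].
- by move=> x y [h1 h2] [h3 h4]; split; [exact: AspanD|move=> h; apply: in_nD; auto].
- by move=> c x [h1 h2]; split; [exact: AspanZ|move=> h; apply: in_nZ; auto].
move=> w2 w2Y; have hw2 := hY0 _ w2Y.
rewrite scalerA -exprD /shW /=.
have := shr_span (rev (flat w1)) (rev (flat w2)); rewrite !revK.
apply: (Span_ind2 (P := fun x => Aspan H0word (hbar ^+ (count_mem 0%N w1 + count_mem 0%N w2) *: x) /\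
   (n0word w1 -> in_n (hbar ^+ (count_mem 0%N w1 + count_mem 0%N w2) *: x)))).
- by rewrite scaler0; split; [exact: Aspan0|move=> _; exact: in_n0'].
- move=> x y [h1 h2] [h3 h4]; rewrite scalerDr.
  by split; [exact: AspanD|move=> h; apply: in_nD; auto].
- move=> c g [s [m [-> hI]]]; rewrite scalerA mulrC -scalerA.
  have [h1 h2] := gen_final hw1 hw2 hI.
  by split; [exact: AspanZ|move=> h; apply: in_nZ; auto].
Qed.

Lemma sh_part x y : in_n x -> in_H0 y -> in_n (shuffle x y).
Proof.
move=> [y0 [z0 [[Y1 [hY1 ->]] [[Z1 [hZ1 ->]] ->]]]] [Y0 [hY0 ->]].
rewrite shuffle_lin linD linZ; apply: in_nD.
  rewrite lin_iotaA; apply: (lin_ind (P := in_n)).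
  - exact: in_n0'.
  - exact: in_nD.
  - exact: in_nZ.
  move=> w wY1; have hw := hY1 _ wY1.
  have hH : H0word w by right; case: hw.
  by have [_ h] := main_term hY0 hH; exact: h hw.
apply: in_n_H; rewrite lin_iotaA; apply: (lin_ind (P := Aspan H0word)).
- exact: Aspan0.
- exact: AspanD.
- exact: AspanZ.
move=> w wZ1; have hw := hZ1 _ wZ1.
by have [h _] := main_term hY0 hw; exact: h.
Qed.

Theorem proposition3p7 :
  (forall X Y : CA, in_n (iotaA X) -> in_H0 (iotaA Y) -> in_n (iotaA (harm X Y)))
  /\ (forall x y : H, in_n x -> in_H0 y -> in_n (shuffle x y)).
Proof. by split; [exact: harm_part|exact: sh_part]. Qed.
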